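(* Let $f,g\in\mathcal{S}(\Omega)$. If $x\in\Omega$ is real and $x\in V(f)\cup V(g)$, then $x\in V(f\cdot g)$. Now let $x\in\Omega\setminus\mathbb{R}$. (1) If $\mathbb{S}_x\subseteq V(f)$ or $\mathbb{S}_x\subseteq V(g)$, then $\mathbb{S}_x\subseteq V(f\cdot g)$. (2) If $\mathbb{S}_x\cap V(f)$ contains a point $y$, then $(f\cdot g)'_s(x)=f'_s(x)g^\circ_s(x)-(\mathrm{im}(y)f'_s(x))g'_s(x)$, and: (a) if $f'_s(x)$ is invertible and $(f\cdot g)'_s(x)=0$, then $\mathbb{S}_x\subseteq V(f\cdot g)$; (b) if $(f\cdot g)'_s(x)$ is invertible, then $\mathbb{S}_x\cap V(f\cdot g)\subseteq\{w\}$ with \[w=\big((yf'_s(x))g^\circ_s(x)-(y\,\mathrm{im}(y)f'_s(x))g'_s(x)\big)\big((f\cdot g)'_s(x)\big)^{-1}.\] (3) If $\mathbb{S}_x\cap V(g)$ contains a point $z$, then $(f\cdot g)'_s(x)=f^\circ_s(x)g'_s(x)-f'_s(x)(\mathrm{im}(z)g'_s(x))$, and: (a) if $g'_s(x)$ is invertible and $(f\cdot g)'_s(x)=0$, then $\mathbb{S}_x\subseteq V(f\cdot g)$; (b) if $(f\cdot g)'_s(x)$ is invertible, then $\mathbb{S}_x\cap V(f\cdot g)\subseteq\{w\}$ with \[w=\big(f^\circ_s(x)(zg'_s(x))-f'_s(x)(z\,\mathrm{im}(z)g'_s(x))\big)\big((f\cdot g)'_s(x)\big)^{-1}.\] (4)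 If, for some $y,z\in\mathbb{S}_x$, $y\in V(f)$ and $z\in V(g)$, then $(f\cdot g)'_s(x)=(y^cf'_s(x))g'_s(x)-f'_s(x)(zg'_s(x))$, and: (a) if $f'_s(x)$ or $g'_s(x)$ is invertible and $(f\cdot g)'_s(x)=0$, then $\mathbb{S}_x\subseteq V(f\cdot g)$; (b) if $(f\cdot g)'_s(x)$ is invertible, then $\mathbb{S}_x\cap V(f\cdot g)\subseteq\{w\}$ with \[w=\big(n(x)f'_s(x)g'_s(x)-(yf'_s(x))(zg'_s(x))\big)\big((f\cdot g)'_s(x)\big)^{-1}.\]
   Context: Let $A$ be a finite-dimensional real algebra with unit $1$ ($\mathbb{R}$ identified with $\mathbb{R}1$) which is alternative (the associator $(x,y,z)=(xy)z-x(yz)$ is alternating), with a $^*$-involution $x\mapsto x^c$ (real linear, $(x^c)^c=x$, $(xy)^c=y^cx^c$, $r^c=r$ for $r\in\mathbb{R}$). Let $t(x)=x+x^c$, $n(x)=xx^c$, $\mathbb{S}_A=\{J\in A:t(J)=0,n(J)=1\}$ (assumed non-empty), $Q_A=\mathbb{R}\cup\{x:t(x),n(x)\in\mathbb{R},4n(x)>t(x)^2\}$; every $x\in Q_A$ is $\alpha+\beta J$ with $\alpha,\beta\in\mathbb{R}$, $J\in\mathbb{S}_A$; $x^c=\alpha-\beta J$, $\mathrm{re}(x)=t(x)/2$, $\mathrm{im}(x)=x-\mathrm{re}(x)$, $\mathbb{S}_x=\{\alpha+\beta I:I\in\mathbb{S}_A\}$. Let $D\subseteq\mathbb{C}$ be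 non-empty, invariant under conjugation, $\Omega=\{\alpha+\beta J:\alpha+i\beta\in D,J\in\mathbb{S}_A\}$. $A_{\mathbb{C}}=\{a+\imath b\}$ with $(a+\imath b)(a'+\imath b')=aa'-bb'+\imath(ab'+ba')$, $\overline{a+\imath b}=a-\imath b$. A stem function $F=F_1+\imath F_2:D\to A_{\mathbb{C}}$ satisfies $F(\bar z)=\overline{F(z)}$ and induces the slice function $f=\mathcal{I}(F)$, $f(\alpha+\beta J)=F_1(\alpha+i\beta)+JF_2(\alpha+i\beta)$; $\mathcal{S}(\Omega)$ is the set of slice functions; slice product $f\cdot g=\mathcal{I}(FG)$. $V(h)=\{x:h(x)=0\}$. $f^\circ_s(x)=\frac12(f(x)+f(x^c))$ and $f'_s(x)=\frac12\mathrm{im}(x)^{-1}(f(x)-f(x^c))$ for $x\in\Omega\setminus\mathbb{R}$. *)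

(* Defs.v *)
From HB Require Import structures.
From mathcomp Require Import all_boot all_order all_algebra.
From mathcomp Require Import boolp classical_sets reals.
Set Implicit Arguments. Unset Strict Implicit. Unset Printing Implicit Defensive.
Import Order.TTheory GRing.Theory Num.Theory.
Local Open Scope ring_scope.
Local Open Scope classical_set_scope.

(* A finite-dimensional real vector space A (vectType R, R : realType) carrying
   a (possibly non-associative) bilinear product, a unit and a *-involution. *)
Record alg_data (R : realType) (A : vectType R) := AlgData {
  amul : A -> A -> A;
  aone : A;
  aconj : A -> A }.

Section Defs.
Variables (R : realType) (A : vectType R) (d : alg_data A).
Local Notation "x ** y" := (amul d x y) (at level 40, left associativity).
Local Notation "1a" := (aone d).
Local Notation "x ^c" := (aconj d x).

Definition assoc (x y z : A) : A := (x ** y) ** z - x ** (y ** z).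

Definition is_alt_star_alg : Prop :=
  (forall (a : R) (x y z : A), (a *: x + y) ** z = a *: (x ** z) + y ** z) /\
      (forall (a : R) (x y z : A), z ** (a *: x + y) = a *: (z ** x) + z ** y) /\
      (forall x : A, 1a ** x = x /\ x ** 1a = x) /\
      1a != 0 /\
      (forall x y : A, assoc x x y = 0 /\ assoc x y x = 0 /\ assoc y x x = 0) /\
      (forall (a : R) (x y : A), (a *: x + y)^c = a *: x^c + y^c) /\
      (forall x : A, (x^c)^c = x) /\
      (forall x y : A, (x ** y)^c = y^c ** x^c) /\
      (forall r : R, (r *: 1a)^c = r *: 1a).

Definition is_real (x : A) : Prop := exists r : R, x = r *: 1a.

Definition trace (x : A) : A := x + x^c.
Definition anorm (x : A) : A := x ** x^c.

Definition imag_units : set A := [set J | trace J = 0 /\ anorm J = 1a].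

Definition re (x : A) : A := 2^-1 *: trace x.
Definition im (x : A) : A := x - re x.

(* two-sided invertibility and the inverse (chosen; unique in an alternative algebra) *)
Definition invertible (a : A) : Prop := exists b : A, a ** b = 1a /\ b ** a = 1a.
Definition ainv (a : A) : A := xget 0 [set b | a ** b = 1a /\ b ** a = 1a].

(* D is a subset of C, encoded as R * R (alpha + i beta |-> (alpha, beta)). *)
Definition circ_set (D : set (R * R)) : set A :=
  [set x | exists (al be : R) (J : A), D (al, be) /\ imag_units J /\ x = al *: 1a + be *: J].

Definition sphere (x : A) : set A :=
  [set y | exists (al be : R) (J I : A), imag_units J /\ imag_units I /\
           x = al *: 1a + be *: J /\ y = al *: 1a + be *: I].

Definition zeros (Om : set A) (h : A -> A) : set A := [set u | Om u /\ h u = 0].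

(* stem function F = F1 + i F2 on D: F(conj z) = conj (F z) *)
Definition stem (D : set (R * R)) (F1 F2 : R -> R -> A) : Prop :=
  forall al be : R, D (al, be) -> F1 al (- be) = F1 al be /\ F2 al (- be) = - F2 al be.

Definition induced (D : set (R * R)) (F1 F2 : R -> R -> A) (f : A -> A) : Prop :=
  forall (al be : R) (J : A), D (al, be) -> imag_units J ->
    f (al *: 1a + be *: J) = F1 al be + J ** F2 al be.

(* product of stem functions in A_C: (F1 + i F2)(G1 + i G2) *)
Definition stem_prod1 (F1 F2 G1 G2 : R -> R -> A) : R -> R -> A :=
  fun al be => F1 al be ** G1 al be - F2 al be ** G2 al be.
Definition stem_prod2 (F1 F2 G1 G2 : R -> R -> A) : R -> R -> A :=
  fun al be => F1 al be ** G2 al be + F2 al be ** G1 al be.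

Definition sph_val (f : A -> A) (x : A) : A := 2^-1 *: (f x + f x^c).
Definition sph_der (f : A -> A) (x : A) : A :=
  2^-1 *: (ainv (im x) ** (f x - f x^c)).

End Defs.

(* Main.v *)
Require Import Defs.
From HB Require Import structures.
From mathcomp Require Import all_boot all_order all_algebra ring lra.
From mathcomp Require Import boolp classical_sets reals.
Set Implicit Arguments. Unset Strict Implicit. Unset Printing Implicit Defensive.
Import Order.TTheory GRing.Theory Num.Theory.
Local Open Scope ring_scope.
Local Open Scope classical_set_scope.

Definition crd (R : realType) (A : vectType R) (i : 'I_(\dim (@fullv R A))) (v : A) : R :=
  coord (vbasis fullv) i v.
Lemma crdD (R : realType) (A : vectType R) i (x y : A) : crd i (x + y) = crd i x + crd i y.
Proof. by rewrite /crd linearD. Qed.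
Lemma crdN (R : realType) (A : vectType R) i (x : A) : crd i (- x) = - crd i x.
Proof. by rewrite /crd linearN. Qed.
Lemma crdZ (R : realType) (A : vectType R) i (a : R) (x : A) : crd i (a *: x) = a * crd i x.
Proof. by rewrite /crd linearZ. Qed.
Lemma crd0 (R : realType) (A : vectType R) i : crd i (0 : A) = 0.
Proof. by rewrite /crd linear0. Qed.
Lemma crd_inj (R : realType) (A : vectType R) (x y : A) : (forall i, crd i x = crd i y) -> x = y.
Proof. move=> H; rewrite (coord_vbasis (memvf x)) (coord_vbasis (memvf y)); apply: eq_bigr => i _; by rewrite -!/(crd _ _) H. Qed.
Ltac zm := apply: crd_inj => ?; rewrite ?(crdD, crdN, crdZ, crd0); (ring || (field; try done)).

Section Alg.
Variables (R : realType) (A : vectType R) (d : alg_data A).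
Hypothesis Hd : is_alt_star_alg d.
Local Notation "x ** y" := (amul d x y) (at level 40, left associativity).
Local Notation "1a" := (aone d).
Local Notation "x ^c" := (aconj d x).

Lemma mulDl x y z : (x + y) ** z = x ** z + y ** z.
Proof. by case: Hd => H _; rewrite -[x in LHS]scale1r H scale1r. Qed.
Lemma mulDr x y z : z ** (x + y) = z ** x + z ** y.
Proof. by case: Hd => _ [H _]; rewrite -[x in LHS]scale1r H scale1r. Qed.
Lemma mul0l z : 0 ** z = 0.
Proof. by move: (mulDl 0 0 z); rewrite addr0 => /eqP; rewrite -subr_eq0 opprD addrA subrr sub0r oppr_eq0 => /eqP. Qed.
Lemma mul0r z : z ** 0 = 0.
Proof. by move: (mulDr 0 0 z); rewrite addr0 => /eqP; rewrite -subr_eq0 opprD addrA subrr sub0r oppr_eq0 => /eqP. Qed.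
Lemma mulZl a x z : (a *: x) ** z = a *: (x ** z).
Proof. by case: Hd => H _; rewrite -[a *: x]addr0 H mul0l addr0. Qed.
Lemma mulZr a x z : z ** (a *: x) = a *: (z ** x).
Proof. by case: Hd => _ [H _]; rewrite -[a *: x]addr0 H mul0r addr0. Qed.
Lemma mulNl x z : (- x) ** z = - (x ** z).
Proof. by rewrite -scaleN1r mulZl scaleN1r. Qed.
Lemma mulNr x z : z ** (- x) = - (z ** x).
Proof. by rewrite -scaleN1r mulZr scaleN1r. Qed.
Lemma mul1l x : 1a ** x = x. Proof. by case: Hd => _ [_ [H _]]; case: (H x). Qed.
Lemma mul1r x : x ** 1a = x. Proof. by case: Hd => _ [_ [H _]]; case: (H x). Qed.
Lemma one_neq0 : 1a != 0. Proof. by case: Hd => _ [_ [_ [H _]]]. Qed.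
Lemma altL x y : assoc d x x y = 0. Proof. by case: Hd => _ [_ [_ [_ [H _]]]]; case: (H x y). Qed.
Lemma altF x y : assoc d x y x = 0. Proof. by case: Hd => _ [_ [_ [_ [H _]]]]; case: (H x y) => _ []. Qed.
Lemma altR x y : assoc d y x x = 0. Proof. by case: Hd => _ [_ [_ [_ [H _]]]]; case: (H x y) => _ []. Qed.

Ltac ex := rewrite /assoc ?(mulDl, mulDr, mulNl, mulNr, mulZl, mulZr, mul0l, mul0r).

Lemma alt1 u v w : assoc d u v w + assoc d v u w = 0.
Proof.
have E : assoc d u v w + assoc d v u w =
  assoc d (u + v) (u + v) w - assoc d u u w - assoc d v v w by ex; zm.
by rewrite E !altL !subr0.
Qed.
Lemma alt2 u v w : assoc d u v w + assoc d u w v = 0.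
Proof.
have E : assoc d u v w + assoc d u w v =
  assoc d u (v + w) (v + w) - assoc d u v v - assoc d u w w by ex; zm.
by rewrite E !altR !subr0.
Qed.

Lemma ML x y z : x ** (y ** (x ** z)) = ((x ** y) ** x) ** z.
Proof.
apply/eqP; rewrite -subr_eq0; apply/eqP.
have E : (4%:R : R) *: (x ** (y ** (x ** z)) - ((x ** y) ** x) ** z) = (1%:R) *: (assoc d x x (y ** z) + assoc d x x (y ** z)) + (-(2%:R)) *: (assoc d x y (x ** z) + assoc d y x (x ** z)) + (-(2%:R)) *: (assoc d x (y ** x) z + assoc d (y ** x) x z) + (-(2%:R)) *: (assoc d x (x ** y) z + assoc d (x ** y) x z) + (2%:R) *: (assoc d y (x ** x) z + assoc d (x ** x) y z) + (1%:R) *: ((assoc d x x y + assoc d x x y) ** z) + (-(4%:R)) *: ((assoc d x x y + assoc d x y x) ** z) + (2%:R) *: ((assoc d x y x + assoc d y x x) ** z) + (1%:R) *: (y ** (assoc d x x z + assoc d x x z)) + (-(2%:R)) *: (x ** (assoc d x y z + assoc d y x z)).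
{ ex; zm. }
move: E; rewrite !(alt1, alt2, mul0l, mul0r, scaler0, addr0) => /eqP.
by rewrite scaler_eq0 pnatr_eq0 /= => /eqP.
Qed.

Lemma MR x y z : ((z ** x) ** y) ** x = z ** ((x ** y) ** x).
Proof.
apply/eqP; rewrite -subr_eq0; apply/eqP.
have E : (6%:R : R) *: (((z ** x) ** y) ** x - z ** ((x ** y) ** x)) = (2%:R) *: (assoc d x x (y ** z) + assoc d x x (y ** z)) + (-(4%:R)) *: (assoc d x x (y ** z) + assoc d x (y ** z) x) + (1%:R) *: (assoc d x x (z ** y) + assoc d x x (z ** y)) + (-(2%:R)) *: (assoc d x x (z ** y) + assoc d x (z ** y) x) + (4%:R) *: (assoc d x y (z ** x) + assoc d y x (z ** x)) + (2%:R) *: (assoc d x y (x ** z) + assoc d y x (x ** z)) + (2%:R) *: (assoc d x z (x ** y) + assoc d z x (x ** y)) + (-(2%:R)) *: (assoc d x z (x ** y) + assoc d x (x ** y) z) + (4%:R) *: (assoc d x z (y ** x) + assoc d z x (y ** x)) + (-(2%:R)) *: (assoc d x z (y ** x) + assoc d x (y ** x) z) + (2%:R) *: (assoc d x (x ** y) z + assoc d (x ** y) x z) + (-(4%:R)) *: (assoc d y x (z ** x) + assoc d y (z ** x) x) + (-(2%:R)) *: (assoc d y x (x ** z) + assoc d y (x ** z) x) + (4%:R) *: (assoc d y (z ** x) x + assoc d (z ** x) y x) + (2%:R) *: (assoc d y (x ** z) x + assoc d (x ** z) y x) + (-(2%:R)) *: (assoc d z x (x ** y) + assoc d z (x ** y)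 x) + (4%:R) *: (assoc d z (x ** y) x + assoc d (x ** y) z x) + (2%:R) *: (z ** (assoc d x x y + assoc d x x y)) + (1%:R) *: ((assoc d x x y + assoc d x x y) ** z) + (-(4%:R)) *: (z ** (assoc d x x y + assoc d x y x)) + (-(2%:R)) *: ((assoc d x x y + assoc d x y x) ** z) + (-(4%:R)) *: ((assoc d x y z + assoc d x z y) ** x) + (2%:R) *: ((assoc d x z y + assoc d z x y) ** x) + (-(2%:R)) *: (x ** (assoc d y x z + assoc d y z x)) + (-(2%:R)) *: (x ** (assoc d y z x + assoc d z y x)).
{ ex; zm. }
move: E; rewrite !(alt1, alt2, mul0l, mul0r, scaler0, addr0) => /eqP.
by rewrite scaler_eq0 pnatr_eq0 /= => /eqP.
Qed.


Lemma RIP a b z : a ** b = 1a -> b ** a = 1a -> (z ** a) ** b = z.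
Proof.
move=> hab hba.
have r3 w : ((w ** a) ** b) ** a = w ** a by rewrite MR hab mul1l.
have r3' w : ((w ** b) ** a) ** b = w ** b by rewrite MR hba mul1l.
have hPQ x : (x ** a) ** b + (x ** b) ** a = 2%:R *: x.
  have := alt2 x a b; rewrite /assoc hab hba mul1r => h.
  apply: crd_inj => i; move: (congr1 (crd i) h); rewrite ?(crdD, crdN, crdZ, crd0) => *; lra.
set p := (z ** a) ** b; set q := (z ** b) ** a.
have Pp : (p ** a) ** b = p by rewrite /p r3.
have Qq : (q ** b) ** a = q by rewrite /q r3'.
have Pq : (q ** a) ** b = q.
  have := hPQ q; rewrite Qq => h.
  apply: crd_inj => i; move: (congr1 (crd i) h); rewrite ?(crdD, crdN, crdZ, crd0) => *; lra.
have e := hPQ z.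
have hp : p = 2%:R *: z - q.
  apply: crd_inj => i; move: (congr1 (crd i) e); rewrite ?(crdD, crdN, crdZ, crd0) => *; lra.
move: Pp; rewrite {1}hp !(mulDl, mulNl, mulZl) -/p Pq => Pp.
apply: crd_inj => i; move: (congr1 (crd i) e) (congr1 (crd i) Pp);
  rewrite ?(crdD, crdN, crdZ, crd0) => *; lra.
Qed.

Lemma LIP a b z : a ** b = 1a -> b ** a = 1a -> b ** (a ** z) = z.
Proof.
move=> hab hba.
have l3 w : a ** (b ** (a ** w)) = a ** w by rewrite ML hab mul1l.
have l3' w : b ** (a ** (b ** w)) = b ** w by rewrite ML hba mul1l.
have hPQ x : b ** (a ** x) + a ** (b ** x) = 2%:R *: x.
  have := alt1 b a x; rewrite /assoc hab hba !mul1l => h.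
  apply: crd_inj => i; move: (congr1 (crd i) h); rewrite ?(crdD, crdN, crdZ, crd0) => *; lra.
set p := b ** (a ** z); set q := a ** (b ** z).
have Pp : b ** (a ** p) = p by rewrite /p l3.
have Qq : a ** (b ** q) = q by rewrite /q l3'.
have Pq : b ** (a ** q) = q.
  have := hPQ q; rewrite Qq => h.
  apply: crd_inj => i; move: (congr1 (crd i) h); rewrite ?(crdD, crdN, crdZ, crd0) => *; lra.
have e := hPQ z.
have hp : p = 2%:R *: z - q.
  apply: crd_inj => i; move: (congr1 (crd i) e); rewrite ?(crdD, crdN, crdZ, crd0) => *; lra.
move: Pp; rewrite {1}hp !(mulDr, mulNr, mulZr) -/p Pq => Pp.
apply: crd_inj => i; move: (congr1 (crd i) e) (congr1 (crd i) Pp);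
  rewrite ?(crdD, crdN, crdZ, crd0) => *; lra.
Qed.

Lemma key2 b b' I c e : b ** b' = 1a -> b' ** b = 1a -> I ** I = - 1a ->
  b ** c = (I ** b) ** e -> (I ** b) ** c = - (b ** e).
Proof.
move=> h1 h2 hI h.
have hc : c = b' ** ((I ** b) ** e) by rewrite -h LIP.
rewrite hc ML (RIP I h1 h2).
have := altL I b; rewrite /assoc hI mulNl mul1l => /eqP; rewrite subr_eq0 => /eqP <-.
by rewrite mulNl.
Qed.

Lemma key3 e e' I a b : e ** e' = 1a -> e' ** e = 1a -> I ** I = - 1a ->
  a ** e = b ** (I ** e) -> a ** (I ** e) = - (b ** e).
Proof.
move=> h1 h2 hI h.
have ha : a = (b ** (I ** e)) ** e' by rewrite -h RIP.
rewrite ha MR (RIP I h1 h2).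
have := altL I e; rewrite /assoc hI mulNl mul1l => /eqP; rewrite subr_eq0 => /eqP <-.
by rewrite mulNr.
Qed.

Lemma conjD x y : (x + y)^c = x^c + y^c.
Proof. by case: Hd => _ [_ [_ [_ [_ [H _]]]]]; rewrite -[x in LHS]scale1r H scale1r. Qed.
Lemma conj0 : (0 : A)^c = 0.
Proof. by move: (conjD 0 0); rewrite addr0 => /eqP; rewrite -subr_eq0 opprD addrA subrr sub0r oppr_eq0 => /eqP. Qed.
Lemma conjZ a x : (a *: x)^c = a *: x^c.
Proof. by case: Hd => _ [_ [_ [_ [_ [H _]]]]]; rewrite -[a *: x]addr0 H conj0 addr0. Qed.
Lemma conjN x : (- x)^c = - x^c.
Proof. by rewrite -scaleN1r conjZ scaleN1r. Qed.
Lemma conj1 : 1a^c = 1a.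
Proof. by case: Hd => _ [_ [_ [_ [_ [_ [_ [_ H]]]]]]]; move: (H 1); rewrite !scale1r. Qed.

Lemma unit_conj J : imag_units d J -> J^c = - J.
Proof. by case=> h _; apply/eqP; rewrite -addr_eq0 addrC; apply/eqP; exact: h. Qed.
Lemma unit_sq J : imag_units d J -> J ** J = - 1a.
Proof.
move=> hJ; have := hJ.2; rewrite /anorm unit_conj // mulNr => <-.
by rewrite opprK.
Qed.
Lemma unitN J : imag_units d J -> imag_units d (- J).
Proof.
move=> hJ; split; first by rewrite /trace conjN unit_conj // opprK addrC subrr.
by rewrite /anorm conjN unit_conj // opprK mulNl -mulNr -(unit_conj hJ); exact: hJ.2.
Qed.

Definition pt (al be : R) (K : A) : A := al *: 1a + be *: K.

Lemma conj_pt al be K : imag_units d K -> (pt al be K)^c = pt al be (- K).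
Proof. by move=> hK; rewrite /pt conjD !conjZ conj1 unit_conj. Qed.

Lemma anorm_pt al be K : imag_units d K -> anorm d (pt al be K) = (al ^+ 2 + be ^+ 2) *: 1a.
Proof.
move=> hK; rewrite /anorm conj_pt // /pt.
rewrite ?(mulDl, mulDr, mulNl, mulNr, mulZl, mulZr, mul1l, mul1r) unit_sq //.
zm.
Qed.

Lemma one_scal_eq (a b : R) : a *: 1a = b *: 1a -> a = b.
Proof.
move=> /eqP; rewrite -subr_eq0 -scalerBl scaler_eq0 (negbTE one_neq0) orbF subr_eq0.
by move/eqP.
Qed.

Lemma unique_pt al be J al' be' J' : imag_units d J -> imag_units d J' ->
  pt al be J = pt al' be' J' -> [/\ al = al', be *: J = be' *: J' & (be' = be \/ be' = - be)].
Proof.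
move=> hJ hJ' h.
have hc : pt al be (- J) = pt al' be' (- J') by rewrite -!conj_pt // h.
have hal : al = al'.
  apply: one_scal_eq; apply: crd_inj => i.
  move: (congr1 (crd i) h) (congr1 (crd i) hc); rewrite /pt ?(crdD, crdN, crdZ, crd0) => *; lra.
subst al'.
have hbe : be *: J = be' *: J'.
  apply: crd_inj => i; move: (congr1 (crd i) h); rewrite /pt ?(crdD, crdN, crdZ, crd0) => *; lra.
split => //.
have hn : (be * be) *: 1a = (be' * be') *: 1a.
  have E1 : (be *: J) ** (- (be *: J)) = (be * be) *: 1a.
    by rewrite mulNr !(mulZl, mulZr) unit_sq //; zm.
  have E2 : (be' *: J') ** (- (be' *: J')) = (be' * be') *: 1a.
    by rewrite mulNr !(mulZl, mulZr) unit_sq //; zm.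
  by rewrite -E1 -E2 hbe.
move/one_scal_eq: hn => /eqP; rewrite -subr_eq0.
have -> : be * be - be' * be' = (be - be') * (be + be') by ring.
rewrite mulf_eq0 => /orP[]; rewrite ?subr_eq0 ?addr_eq0 => /eqP ->; [left|right] => //.
by rewrite opprK.
Qed.

Lemma sphere_pt al be J y : imag_units d J -> sphere d (pt al be J) y ->
  exists K, imag_units d K /\ y = pt al be K.
Proof.
move=> hJ [al' [be' [J' [I [hJ' [hI [hx hy]]]]]]].
have [hal _ hb] := unique_pt hJ hJ' hx; subst al'.
case: hb => hb; subst be'.
  by exists I; split.
by exists (- I); split; [exact: unitN | rewrite hy /pt scaleNr scalerN].
Qed.

Lemma pt_sphere al be J K : imag_units d J -> imag_units d K ->
  sphere d (pt al be J) (pt al be K).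
Proof. by move=> hJ hK; exists al, be, J, K. Qed.

Lemma real_pt al be J : imag_units d J -> is_real d (pt al be J) -> be = 0.
Proof.
move=> hJ [r hr].
have hc : pt al be (- J) = r *: 1a by rewrite -conj_pt // hr conjZ conj1.
have : (2 * be) *: J = 0.
  apply: crd_inj => i; move: (congr1 (crd i) hr) (congr1 (crd i) hc);
  rewrite /pt ?(crdD, crdN, crdZ, crd0) => *; lra.
move/eqP; rewrite scaler_eq0 mulf_eq0 pnatr_eq0 /= => /orP[/eqP //|/eqP hJ0].
have := unit_sq hJ; rewrite hJ0 mul0l => /eqP; rewrite eq_sym oppr_eq0 (negbTE one_neq0) //.
Qed.

Lemma re_pt al be J : imag_units d J -> re d (pt al be J) = al *: 1a.
Proof. move=> hJ; rewrite /re /trace conj_pt // /pt; zm. Qed.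
Lemma im_pt al be J : imag_units d J -> im d (pt al be J) = be *: J.
Proof. move=> hJ; rewrite /im re_pt // /pt; zm. Qed.

Lemma ainv_spec a : invertible d a -> a ** ainv d a = 1a /\ ainv d a ** a = 1a.
Proof. by move=> h; rewrite /ainv; apply: (xgetPex 0 h). Qed.

Lemma ainv_J be J : be != 0 -> imag_units d J -> ainv d (be *: J) = (- be^-1) *: J.
Proof.
move=> hbe hJ.
have hinv : invertible d (be *: J).
  exists ((- be^-1) *: J); rewrite !(mulZl, mulZr) unit_sq // !scalerA.
  by split; rewrite scalerN -scaleNr mulrN opprK mulfV // scale1r.
have [_ h] := ainv_spec hinv.
set u := ainv d (be *: J) in h *.
move: h; rewrite mulZr => h.
have h2 : be *: ((u ** J) ** J) = J by rewrite -mulZl h mul1l.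
have := altR J u; rewrite /assoc unit_sq // mulNr mul1r => /eqP; rewrite subr_eq0 => /eqP hu.
rewrite hu in h2.
have := congr1 (fun t => be^-1 *: t) h2; rewrite /= scalerA mulVf // scale1r => hh.
by rewrite -[u]opprK hh scaleNr.
Qed.

Lemma sph_pt D H1 H2 h al be J : induced d D H1 H2 h -> D (al, be) -> imag_units d J -> be != 0 ->
  sph_val d h (pt al be J) = H1 al be /\ sph_der d h (pt al be J) = be^-1 *: H2 al be.
Proof.
move=> hh hD hJ hbe.
have e1 : h (pt al be J) = H1 al be + J ** H2 al be by rewrite /pt hh.
have e2 : h (pt al be J)^c = H1 al be - J ** H2 al be by rewrite conj_pt // /pt hh ?mulNl //; exact: unitN.
split; first by rewrite /sph_val e1 e2; zm.
rewrite /sph_der im_pt // ainv_J // e1 e2.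
have := altL J (H2 al be); rewrite /assoc unit_sq // mulNl mul1l => /eqP; rewrite subr_eq0 => /eqP hu.
rewrite ?(mulDl, mulDr, mulNl, mulNr, mulZl, mulZr) -hu.
zm.
Qed.

Lemma self_opp (x : A) : x = - x -> x = 0.
Proof. move=> h; apply: crd_inj => i; move: (congr1 (crd i) h); rewrite ?(crdN, crd0) => *; lra. Qed.

Lemma om_pt D al be K : D (al, be) -> imag_units d K -> circ_set d D (pt al be K).
Proof. by move=> hD hK; exists al, be, K. Qed.

Lemma invZ k b : k != 0 -> invertible d (k *: b) -> exists b', b ** b' = 1a /\ b' ** b = 1a.
Proof.
move=> hk [p [h1 h2]]; exists (k *: p); split.
  by rewrite mulZr -mulZl.
by rewrite mulZl -mulZr.
Qed.


Variables (D : set (R * R)) (F1 F2 G1 G2 : R -> R -> A)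
  (HF : stem D F1 F2) (HG : stem D G1 G2) (f g fg : A -> A)
  (Hf : induced d D F1 F2 f) (Hg : induced d D G1 G2 g)
  (Hfg : induced d D (stem_prod1 d F1 F2 G1 G2) (stem_prod2 d F1 F2 G1 G2) fg).

Ltac exx := rewrite ?(mulDl, mulDr, mulNl, mulNr, mulZl, mulZr, mul0l, mul0r, mul1l, mul1r).

Lemma main_real x : circ_set d D x -> is_real d x ->
  (zeros (circ_set d D) f x \/ zeros (circ_set d D) g x) -> zeros (circ_set d D) fg x.
Proof.
move=> [al [be [J [hD [hJ hx]]]]] hr hV.
have hx' : x = pt al be J := hx; clear hx; subst x.
have hb0 := real_pt hJ hr; subst be.
have hF2 : F2 al 0 = 0 by apply: self_opp; have [_ <-] := HF hD; rewrite oppr0.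
have hG2 : G2 al 0 = 0 by apply: self_opp; have [_ <-] := HG hD; rewrite oppr0.
split; first exact: om_pt.
rewrite /pt Hfg // /stem_prod1 /stem_prod2 hF2 hG2.
case: hV => -[_]; rewrite /pt ?Hf ?Hg // ?hF2 ?hG2 mul0r addr0 => ->; exx; by rewrite !subrr ?addr0 ?mul0r.
Qed.

Lemma main_nonreal x : circ_set d D x -> ~ is_real d x ->
    let Sx := sphere d x in
    let fs := sph_der d f x in
    let gs := sph_der d g x in
    let fo := sph_val d f x in
    let go := sph_val d g x in
    let hs := sph_der d fg x in
    let V := zeros (circ_set d D) in
    ((Sx `<=` V f \/ Sx `<=` V g) -> Sx `<=` V fg) /\
    (forall y : A, Sx y -> V f y ->
      hs = fs ** go - ((im d y) ** fs) ** gs /\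
      (invertible d fs -> hs = 0 -> Sx `<=` V fg) /\
      (invertible d hs ->
        Sx `&` V fg `<=`
        [set ((y ** fs) ** go - ((y ** (im d y)) ** fs) ** gs) ** (ainv d hs)])) /\
    (forall z : A, Sx z -> V g z ->
      hs = fo ** gs - fs ** ((im d z) ** gs) /\
      (invertible d gs -> hs = 0 -> Sx `<=` V fg) /\
      (invertible d hs ->
        Sx `&` V fg `<=`
        [set (fo ** (z ** gs) - fs ** ((z ** (im d z)) ** gs)) ** (ainv d hs)])) /\
    (forall y z : A, Sx y -> Sx z -> V f y -> V g z ->
      hs = ((aconj d y) ** fs) ** gs - fs ** (z ** gs) /\
      ((invertible d fs \/ invertible d gs) -> hs = 0 -> Sx `<=` V fg) /\
      (invertible d hs ->
        Sx `&` V fg `<=`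
        [set (((anorm d x) ** fs) ** gs - (y ** fs) ** (z ** gs)) ** (ainv d hs)])).
Proof.
move=> [al [be [J [hD [hJ hx]]]]] hnr.
have hbe : be != 0.
  by apply/eqP => hb; apply: hnr; exists al; rewrite hx hb scale0r addr0.
have hx' : x = pt al be J := hx; clear hx; subst x.
cbv zeta.
have [fo_e fs_e] := sph_pt Hf hD hJ hbe.
have [go_e gs_e] := sph_pt Hg hD hJ hbe.
have [_ hs_e] := sph_pt Hfg hD hJ hbe.
rewrite fo_e fs_e go_e gs_e hs_e /stem_prod2.
have hf K : imag_units d K -> f (pt al be K) = F1 al be + K ** F2 al be.
  by move=> hK; rewrite /pt Hf.
have hg K : imag_units d K -> g (pt al be K) = G1 al be + K ** G2 al be.
  by move=> hK; rewrite /pt Hg.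
have hfg K : imag_units d K -> fg (pt al be K) =
   (F1 al be ** G1 al be - F2 al be ** G2 al be) + K ** (F1 al be ** G2 al be + F2 al be ** G1 al be).
  by move=> hK; rewrite /pt Hfg.
set a := F1 al be in hf hfg *; set b := F2 al be in hf hfg *; set c := G1 al be in hg hfg *; set e := G2 al be in hg hfg *.
have Hb : forall X, X = al *: (be^-1 *: (a ** e + b ** c)) - (a ** c - b ** e) ->
    invertible d (be^-1 *: (a ** e + b ** c)) ->
    sphere d (pt al be J) `&` zeros (circ_set d D) fg `<=`
    [set X ** ainv d (be^-1 *: (a ** e + b ** c))].
  move=> X hX hinv y [hy [_ hy0]].
  have [K [hK hyK]] := sphere_pt hJ hy; subst y.
  have [h1 h2] := ainv_spec hinv.
  rewrite hfg // in hy0.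
  have hKY : K ** (a ** e + b ** c) = - (a ** c - b ** e).
    by apply/eqP; rewrite -addr_eq0 addrC hy0.
  have hm : pt al be K ** (be^-1 *: (a ** e + b ** c)) = X.
    by rewrite /pt mulDl !mulZl !mulZr mul1l hKY hX; zm.
  by rewrite /= -hm RIP.
have H2a : forall I, imag_units d I -> a + I ** b = 0 -> invertible d (be^-1 *: b) ->
    be^-1 *: (a ** e + b ** c) = 0 -> sphere d (pt al be J) `<=` zeros (circ_set d D) fg.
  move=> I hI hab hinv hs0.
  have ha : a = - (I ** b) by apply/eqP; rewrite -addr_eq0 hab.
  have hP2 : a ** e + b ** c = 0.
    by move/eqP: hs0; rewrite scaler_eq0 invr_eq0 (negbTE hbe) /= => /eqP.
  have [b' [h1 h2]] := invZ (invr_neq0 hbe) hinv.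
  have hk : b ** c = (I ** b) ** e.
    move: hP2; rewrite ha mulNl => hP2.
    apply: crd_inj => i; move: (congr1 (crd i) hP2); rewrite ?(crdD, crdN, crdZ, crd0) => *; lra.
  have hk2 := key2 h1 h2 (unit_sq hI) hk.
  move=> w /(sphere_pt hJ) [K [hK ->]]; split; first exact: om_pt.
  by rewrite hfg // hP2 mul0r addr0 ha mulNl hk2 opprK subrr.
have H3a : forall I, imag_units d I -> c + I ** e = 0 -> invertible d (be^-1 *: e) ->
    be^-1 *: (a ** e + b ** c) = 0 -> sphere d (pt al be J) `<=` zeros (circ_set d D) fg.
  move=> I hI hce hinv hs0.
  have hc : c = - (I ** e) by apply/eqP; rewrite -addr_eq0 hce.
  have hP2 : a ** e + b ** c = 0.
    by move/eqP: hs0; rewrite scaler_eq0 invr_eq0 (negbTE hbe) /= => /eqP.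
  have [e' [h1 h2]] := invZ (invr_neq0 hbe) hinv.
  have hk : a ** e = b ** (I ** e).
    move: hP2; rewrite hc mulNr => hP2.
    apply: crd_inj => i; move: (congr1 (crd i) hP2); rewrite ?(crdD, crdN, crdZ, crd0) => *; lra.
  have hk2 := key3 h1 h2 (unit_sq hI) hk.
  move=> w /(sphere_pt hJ) [K [hK ->]]; split; first exact: om_pt.
  by rewrite hfg // hP2 mul0r addr0 hc mulNr hk2 opprK subrr.
have hzero : forall u v, u + J ** v = 0 -> u + (- J) ** v = 0 -> u = 0 /\ v = 0.
  move=> u v h1 h2; rewrite mulNl in h2.
  have hu : u = 0.
    apply: crd_inj => i; move: (congr1 (crd i) h1) (congr1 (crd i) h2);
    rewrite ?(crdD, crdN, crdZ, crd0) => *; lra.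
  have hv : J ** v = 0 by move: h1; rewrite hu add0r.
  split => //.
  have := altL J v; rewrite /assoc unit_sq // mulNl mul1l hv mul0r subr0 => /eqP.
  by rewrite oppr_eq0 => /eqP.
split.
  case=> hS.
    have [_ h1] := hS _ (pt_sphere al be hJ hJ).
    have [_ h2] := hS _ (pt_sphere al be hJ (unitN hJ)).
    rewrite hf // in h1; rewrite (hf _ (unitN hJ)) in h2.
    have [ha0 hb0] := hzero _ _ h1 h2.
    move=> w /(sphere_pt hJ) [K [hK ->]]; split; first exact: om_pt.
    by rewrite hfg // ha0 hb0 !mul0l !(subrr, addr0, add0r, mul0r).
  have [_ h1] := hS _ (pt_sphere al be hJ hJ).
  have [_ h2] := hS _ (pt_sphere al be hJ (unitN hJ)).
  rewrite hg // in h1; rewrite (hg _ (unitN hJ)) in h2.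
  have [hc0 he0] := hzero _ _ h1 h2.
  move=> w /(sphere_pt hJ) [K [hK ->]]; split; first exact: om_pt.
  by rewrite hfg // hc0 he0 !mul0r !(subrr, addr0, add0r, mul0r).
split.
  move=> y hy [_ hy0]; have [I [hI hyI]] := sphere_pt hJ hy; subst y.
  rewrite hf // in hy0.
  have ha : a = - (I ** b) by apply/eqP; rewrite -addr_eq0 hy0.
  split; first by rewrite im_pt // ha; exx; zm.
  split; first exact: H2a I hI hy0.
  move=> hinv; apply: Hb hinv.
  rewrite im_pt // /pt ha; exx; rewrite (unit_sq hI); exx; zm.
split.
  move=> z hz [_ hz0]; have [I [hI hzI]] := sphere_pt hJ hz; subst z.
  rewrite hg // in hz0.
  have hc : c = - (I ** e) by apply/eqP; rewrite -addr_eq0 hz0.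
  split; first by rewrite im_pt // hc; exx; zm.
  split; first exact: H3a I hI hz0.
  move=> hinv; apply: Hb hinv.
  rewrite im_pt // /pt hc; exx; rewrite (unit_sq hI); exx; zm.
move=> y z hy hz [_ hy0] [_ hz0].
have [I [hI hyI]] := sphere_pt hJ hy; subst y.
have [I' [hI' hzI]] := sphere_pt hJ hz; subst z.
rewrite hf // in hy0; rewrite hg // in hz0.
have ha : a = - (I ** b) by apply/eqP; rewrite -addr_eq0 hy0.
have hc : c = - (I' ** e) by apply/eqP; rewrite -addr_eq0 hz0.
split; first by rewrite conj_pt // /pt ha hc; exx; zm.
split.
  by case=> hinv; [exact: H2a I hI hy0 hinv | exact: H3a I' hI' hz0 hinv].
move=> hinv; apply: Hb hinv.
rewrite anorm_pt // /pt ha hc; exx; zm.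
Qed.


End Alg.

Theorem theorem5p1 (R : realType) (A : vectType R) (d : alg_data A)
  (Hd : is_alt_star_alg d) (HS : exists J : A, imag_units d J)
  (D : set (R * R)) (HDne : D !=set0)
  (HD : forall al be : R, D (al, be) -> D (al, - be))
  (F1 F2 G1 G2 : R -> R -> A)
  (HF : stem D F1 F2) (HG : stem D G1 G2)
  (f g fg : A -> A)
  (Hf : induced d D F1 F2 f) (Hg : induced d D G1 G2 g)
  (Hfg : induced d D (stem_prod1 d F1 F2 G1 G2) (stem_prod2 d F1 F2 G1 G2) fg) :
  let mul := amul d in
  let Om := circ_set d D in
  let V := zeros Om in
  (forall x : A, Om x -> is_real d x -> (V f x \/ V g x) -> V fg x) /\
  (forall x : A, Om x -> ~ is_real d x ->
    let Sx := sphere d x in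
    let fs := sph_der d f x in
    let gs := sph_der d g x in
    let fo := sph_val d f x in
    let go := sph_val d g x in
    let hs := sph_der d fg x in
    (* (1) *)
    ((Sx `<=` V f \/ Sx `<=` V g) -> Sx `<=` V fg) /\
    (* (2) *)
    (forall y : A, Sx y -> V f y ->
      hs = mul fs go - mul (mul (im d y) fs) gs /\
      (invertible d fs -> hs = 0 -> Sx `<=` V fg) /\
      (invertible d hs ->
        Sx `&` V fg `<=`
        [set mul (mul (mul y fs) go - mul (mul (mul y (im d y)) fs) gs) (ainv d hs)])) /\
    (* (3) *)
    (forall z : A, Sx z -> V g z ->
      hs = mul fo gs - mul fs (mul (im d z) gs) /\
      (invertible d gs -> hs = 0 -> Sx `<=` V fg) /\
      (invertible d hs ->
        Sx `&` V fg `<=`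
        [set mul (mul fo (mul z gs) - mul fs (mul (mul z (im d z)) gs)) (ainv d hs)])) /\
    (* (4) *)
    (forall y z : A, Sx y -> Sx z -> V f y -> V g z ->
      hs = mul (mul (aconj d y) fs) gs - mul fs (mul z gs) /\
      ((invertible d fs \/ invertible d gs) -> hs = 0 -> Sx `<=` V fg) /\
      (invertible d hs ->
        Sx `&` V fg `<=`
        [set mul (mul (mul (anorm d x) fs) gs - mul (mul y fs) (mul z gs)) (ainv d hs)]))).
Proof.
move=> mul Om V; split.
  exact: (main_real Hd HF HG Hf Hg Hfg).
move=> x hx hnr; exact (main_nonreal Hd Hf Hg Hfg hx hnr).
Qed.
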